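(* Let $\mathbb{D}^2=\{z\in\mathbb{C}:|z|\leq 1\}$ be the closed unit disc, with boundary circle $S^1=\{z:|z|=1\}$. Let $f:\mathbb{D}^2\rightarrow\mathbb{D}^2$ be continuous such that $|f(z)-z|<\frac{\sqrt{3}}{2}$ for all $z\in S^1$. Then there exists a continuous map $g:\mathbb{D}^2\rightarrow\mathbb{D}^2$ such that $\|g\circ f-\mathrm{id}_{\mathbb{D}^2}\|_{\infty}=\sup_{z\in\mathbb{D}^2}|g(f(z))-z|<1$. *)

(* Defs.v *)
From Stdlib Require Import Reals.
From Coquelicot Require Export Coquelicot.
Open Scope R_scope.

Definition in_disc (z : C) : Prop := Cmod z <= 1.

Definition circle (z : C) : Prop := Cmod z = 1.

Definition continuous_on_disc (f : C -> C) : Prop :=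
  forall z, in_disc z -> forall eps : R, 0 < eps ->
    exists delta : R, 0 < delta /\
      forall w, in_disc w -> Cmod (Cminus w z) < delta ->
        Cmod (Cminus (f w) (f z)) < eps.

Definition maps_disc (f : C -> C) : Prop := forall z, in_disc z -> in_disc (f z).

(* Main.v *)
Require Import Defs.
From Stdlib Require Import Reals Lra ClassicalEpsilon Classical.
From Coquelicot Require Import Coquelicot.
Open Scope R_scope.

Definition sc (t : R) (p : C) : C := (t * fst p, t * snd p).

Lemma Cmod_sc t p : Cmod (sc t p) = Rabs t * Cmod p.
Proof.
  destruct p as [a b]. unfold sc; simpl.
  replace (t * a, t * b) with (Cmult (RtoC t) (a, b)).
  - rewrite Cmod_mult, Cmod_R; reflexivity.
  - unfold Cmult, RtoC; simpl; f_equal; ring.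
Qed.

Lemma Cmod_le_sum (a b : R) : Cmod (a, b) <= Rabs a + Rabs b.
Proof.
  replace (a, b) with (Cplus (a, 0) (0, b)) by (unfold Cplus; simpl; f_equal; ring).
  eapply Rle_trans; [apply Cmod_triangle|].
  unfold Cmod; simpl.
  replace (a * (a * 1) + 0 * (0 * 1)) with (Rsqr a) by (unfold Rsqr; ring).
  replace (0 * (0 * 1) + b * (b * 1)) with (Rsqr b) by (unfold Rsqr; ring).
  rewrite !sqrt_Rsqr_abs. lra.
Qed.

Lemma Cminus_pair x y u v : Cmod (Cminus (x, y) (u, v)) <= Rabs (x - u) + Rabs (y - v).
Proof.
  unfold Cminus, Cplus, Copp; simpl.
  replace (x + - u) with (x - u) by ring. replace (y + - v) with (y - v) by ring.
  apply Cmod_le_sum.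
Qed.

Lemma Cmod_tri3 a b c : Cmod (Cminus a c) <= Cmod (Cminus a b) + Cmod (Cminus b c).
Proof.
  replace (Cminus a c) with (Cplus (Cminus a b) (Cminus b c)).
  - apply Cmod_triangle.
  - destruct a, b, c; unfold Cminus, Cplus, Copp; simpl; f_equal; ring.
Qed.

Lemma Cmod_sym a b : Cmod (Cminus a b) = Cmod (Cminus b a).
Proof.
  replace (Cminus a b) with (Copp (Cminus b a)).
  - apply Cmod_opp.
  - destruct a, b; unfold Cminus, Cplus, Copp; simpl; f_equal; ring.
Qed.

Lemma Cmod_minus_le a b : Cmod (Cminus a b) <= Cmod a + Cmod b.
Proof.
  unfold Cminus. eapply Rle_trans; [apply Cmod_triangle|]. rewrite Cmod_opp; lra.
Qed.

Lemma Cmod_le_tri a b : Cmod b <= Cmod a + Cmod (Cminus b a).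
Proof.
  replace b with (Cplus a (Cminus b a)) at 1.
  - apply Cmod_triangle.
  - destruct a, b; unfold Cminus, Cplus, Copp; simpl; f_equal; ring.
Qed.

Lemma unif (f : C -> C) : continuous_on_disc f -> forall eps, 0 < eps ->
  exists d, 0 < d /\ forall z w, in_disc z -> in_disc w -> Cmod (Cminus w z) < d ->
    Cmod (Cminus (f w) (f z)) < 2 * eps.
Proof.
  intros Hc eps He.
  assert (H : forall q : C, {d : R | 0 < d /\ (in_disc q -> forall w, in_disc w ->
     Cmod (Cminus w q) < d -> Cmod (Cminus (f w) (f q)) < eps)}).
  { intros q. apply constructive_indefinite_description.
    destruct (Rle_dec (Cmod q) 1) as [Hq|Hq].
    - destruct (Hc q Hq eps He) as [d [Hd1 Hd2]]. exists d. split; auto.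
    - exists 1. split; [lra|]. intros Hq'. unfold in_disc in Hq'. contradiction. }
  pose (dl := fun u v => if Rle_dec (Cmod (u, v)) 1 then proj1_sig (H (u, v)) / 4
                         else (Cmod (u, v) - 1) / 4).
  assert (Hpos : forall u v, 0 < dl u v).
  { intros u v; unfold dl; destruct Rle_dec.
    - destruct (proj2_sig (H (u, v))) as [Hd _]; lra.
    - lra. }
  destruct (compactness_value_2d (-1) 1 (-1) 1 (fun u v => mkposreal _ (Hpos u v))) as [d Hd].
  exists (pos d). split; [apply cond_pos|].
  intros [x y] w Hz Hw Hzw.
  assert (Hb := Rmax_Cmod (x, y)). cbn [fst snd] in Hb. unfold in_disc in Hz.
  assert (Hx : Rabs x <= 1) by (apply Rle_trans with (Rmax (Rabs x) (Rabs y)); [apply Rmax_l| lra]).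
  assert (Hy : Rabs y <= 1) by (apply Rle_trans with (Rmax (Rabs x) (Rabs y)); [apply Rmax_r| lra]).
  apply Rabs_le_between in Hx. apply Rabs_le_between in Hy.
  specialize (Hd x y Hx Hy).
  apply NNPP; intro Hn; apply Hd; intros [u [v [Hu [Hv [H1 [H2 H3]]]]]]; apply Hn.
  simpl in H1, H2, H3.
  assert (Hq := Cminus_pair x y u v).
  unfold dl in H1, H2, H3.
  destruct (Rle_dec (Cmod (u, v)) 1) as [Hq1|Hq1].
  - destruct (H (u, v)) as [d0 [Hd0 Hcont]]. simpl in H1, H2, H3.
    assert (A1 : Cmod (Cminus (x, y) (u, v)) < d0) by lra.
    assert (A2 : Cmod (Cminus w (u, v)) < d0).
    { eapply Rle_lt_trans; [apply (Cmod_tri3 _ (x, y))|]. lra. }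
    assert (B1 := Hcont Hq1 _ Hz A1). assert (B2 := Hcont Hq1 _ Hw A2).
    eapply Rle_lt_trans; [apply (Cmod_tri3 _ (f (u, v)))|].
    rewrite (Cmod_sym (f (u, v))). lra.
  - exfalso. simpl in H1, H2.
    assert (T := Cmod_le_tri (x, y) (u, v)).
    rewrite (Cmod_sym (u, v)) in T. lra.
Qed.

Theorem lemma1 (f : C -> C) :
  continuous_on_disc f -> maps_disc f ->
  (forall z, circle z -> Cmod (Cminus (f z) z) < sqrt 3 / 2) ->
  exists g : C -> C, continuous_on_disc g /\ maps_disc g /\
    exists c : R, c < 1 /\
      forall z, in_disc z -> Cmod (Cminus (g (f z)) z) <= c.
Proof.
  intros Hc Hm Hb.
  set (m := sqrt 3 / 2).
  assert (Hm1 : m < 1).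
  { unfold m. assert (sqrt 3 < 2); [|lra].
    assert (H4 : sqrt 3 < sqrt (2 * 2)) by (apply sqrt_lt_1_alt; lra).
    rewrite sqrt_square in H4; lra. }
  destruct (unif f Hc ((1 - m) / 4)) as [d0 [Hd0 Hu]]; [lra|].
  set (dl := Rmin d0 (1/2)).
  assert (Hdl : 0 < dl /\ dl <= d0 /\ dl <= 1/2).
  { unfold dl; split; [apply Rmin_pos; lra| split; [apply Rmin_l|apply Rmin_r]]. }
  set (t := dl / 2).
  exists (sc t).
  split.
  { intros z Hz eps He. exists eps. split; auto. intros w Hw Hwz.
    replace (Cminus (sc t w) (sc t z)) with (sc t (Cminus w z))
      by (destruct w, z; unfold sc, Cminus, Cplus, Copp; simpl; f_equal; ring).
    rewrite Cmod_sc, Rabs_pos_eq; [|unfold t; lra].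
    assert (0 <= Cmod (Cminus w z)) by apply Cmod_ge_0.
    unfold t; nra. }
  split.
  { intros z Hz. unfold in_disc in *. rewrite Cmod_sc, Rabs_pos_eq; [|unfold t; lra].
    assert (0 <= Cmod z) by apply Cmod_ge_0. unfold t; nra. }
  exists (Rmax (1 - t * (1 - m) / 2) (1 - dl / 2)).
  split.
  { apply Rmax_lub_lt; unfold t; nra. }
  intros z Hz. unfold in_disc in Hz.
  destruct (Rle_dec (Cmod z) (1 - dl)) as [Hr|Hr].
  - eapply Rle_trans; [apply Cmod_minus_le|].
    rewrite Cmod_sc, Rabs_pos_eq; [|unfold t; lra].
    assert (Hf := Hm z Hz). unfold in_disc in Hf.
    assert (0 <= Cmod (f z)) by apply Cmod_ge_0.
    eapply Rle_trans; [|apply Rmax_r]. unfold t; nra.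
  - set (r := Cmod z) in *.
    assert (Hr0 : 0 < r) by lra.
    set (z' := sc (/ r) z).
    assert (Hz'c : circle z').
    { unfold circle, z'. rewrite Cmod_sc, Rabs_pos_eq; [|apply Rlt_le, Rinv_0_lt_compat; lra].
      fold r. field. lra. }
    assert (Hz'd : in_disc z') by (unfold in_disc; rewrite Hz'c; lra).
    assert (Hzz : Cmod (Cminus z z') = 1 - r).
    { replace (Cminus z z') with (sc (1 - / r) z)
        by (unfold z'; destruct z; unfold sc, Cminus, Cplus, Copp; simpl; f_equal; ring).
      rewrite Cmod_sc. fold r.
      replace (Rabs (1 - / r) * r) with (Rabs ((1 - / r) * r))
        by (rewrite Rabs_mult, (Rabs_pos_eq r); lra).
      replace ((1 - / r) * r) with (r - 1) by (field; lra).
      rewrite Rabs_left1; lra. }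
    assert (U := Hu z' z Hz'd Hz ltac:(rewrite Hzz; lra)).
    assert (V := Hb z' Hz'c). fold m in V.
    replace (Cminus (sc t (f z)) z) with
      (Cplus (Cplus (sc t (Cminus (f z) (f z'))) (sc t (Cminus (f z') z'))) (sc (-(r - t)) z')).
    2:{ unfold z'. destruct z as [x y]. destruct (f (x, y)), (f (sc (/ r) (x, y))).
        unfold sc, Cminus, Cplus, Copp; simpl; f_equal; field; lra. }
    eapply Rle_trans; [apply Cmod_triangle|].
    eapply Rle_trans; [apply Rplus_le_compat_r, Cmod_triangle|].
    rewrite !Cmod_sc, Hz'c, (Rabs_pos_eq t), ?Rabs_left1; [|unfold t; lra|unfold t; lra].
    eapply Rle_trans; [|apply Rmax_l].
    assert (0 < t) by (unfold t; lra).
    nra.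
Qed.
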